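(* For every integer $n \ge 2$, let $F_n(x) = \sum_{k=1}^{n} x^{\log k}$ for $0 < x \le 1$. Then $$\frac{\pi^2}{6} \sum_{\substack{p \le n\\ p \text{ prime}}} \frac{1}{\log p} \;\ge\; \int_0^1 \frac{\log F_n(x)}{x}\, dx.$$
   Context: $\log$ denotes the natural logarithm; the sum runs over all primes $p \le n$. *)

(* Defs.v *)
From Stdlib Require Import Reals ZArith Znumtheory.
Open Scope R_scope.

Definition F (n : nat) (x : R) : R :=
  sum_f_R0 (fun j => Rpower x (ln (INR (j + 1)))) (n - 1).

Definition prime_inv_log_sum (n : nat) : R :=
  sum_f_R0 (fun k => if prime_dec (Z.of_nat k) then / ln (INR k) else 0) n.

(* Improper Riemann integral over (0,1]:  int_0^1 f = L  means f is Riemann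
   integrable on every [eps,1] (0 < eps <= 1) and int_eps^1 f -> L as eps -> 0+. *)
Definition improper_integral_0_1 (f : R -> R) (L : R) : Prop :=
  (forall eps, 0 < eps <= 1 -> exists _ : Riemann_integrable f eps 1, True) /\
  (forall delta, 0 < delta -> exists eta, 0 < eta /\
     forall eps (Heps : 0 < eps < eta) (Hle : eps <= 1)
            (pr : Riemann_integrable f eps 1),
       Rabs (RiemannInt pr - L) < delta).

(* Main.v *)
Require Import Defs.
From Stdlib Require Import Reals ZArith Znumtheory.
From Stdlib Require Import Lia Lra Classical_Prop.
From Coquelicot Require Import Coquelicot.
Open Scope R_scope.

Fixpoint sm (g : nat -> R) (N : nat) : R :=
  match N with O => 0 | S N' => sm g N' + g N' end.
Fixpoint pm (g : nat -> R) (N : nat) : R :=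
  match N with O => 1 | S N' => pm g N' * g N' end.

Module Comb.
From mathcomp Require Import all_boot zify.
From mathcomp Require Import Rstruct.
Local Open Scope nat_scope.
Lemma dvd_nat_Z d k : (0 < d)%N -> (d %| k) <-> Z.divide (Z.of_nat d) (Z.of_nat k).
Proof.
move=> d0; split.
  move/dvdnP=> [q ->]; exists (Z.of_nat q); lia.
move=> [z hz]; apply/dvdnP.
have z0 : (0 <= z)%Z by nia.
exists (Z.to_nat z); lia.
Qed.

Lemma primeZ k : Znumtheory.prime (Z.of_nat k) <-> prime k.
Proof.
split.
  move/Znumtheory.prime_alt=> [k1 hk]; apply/primeP; split; first lia.
  move=> d /[dup] dk.
  have k0 : (0 < k)%N by lia.
  have d0 : (0 < d)%N by case: d dk => [|d] //; rewrite dvd0n; lia.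
  move/(dvd_nat_Z d k d0)=> dkZ.
  have dle : (d <= k)%N by apply: dvdn_leq.
  apply/orP; case: (ltnP 1 d) => d1; last by left; apply/eqP; lia.
  case: (ltnP d k) => dk'; last by right; apply/eqP; lia.
  exfalso; apply: (hk (Z.of_nat d)) => //; lia.
move/primeP=> [k1 hk]; apply/Znumtheory.prime_alt; split; first lia.
move=> z zr [q hq].
have z0 : (0 < Z.to_nat z)%N by lia.
have : (Z.to_nat z %| k).
  apply/(dvd_nat_Z _ k z0); exists q; rewrite Z2Nat.id; lia.
move/hk => /orP[] /eqP; lia.
Qed.
Lemma logn_small (n k : nat) (i : nat) : 0 < k <= n -> logn i k < n.+1.
Proof.
move=> /andP[k0 kn].
case pi: (prime i); last by rewrite lognE pi.
have i1 : 1 < i by apply: prime_gt1.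
apply: (leq_ltn_trans _ (ltnSn n)).
apply: leq_trans (ltnW (ltn_expl (logn i k) i1)) _.
apply: leq_trans kn.
by apply: dvdn_leq => //; apply: pfactor_dvdnn.
Qed.

Lemma prod_logn (n k : nat) : 0 < k <= n ->
  \prod_(i < n.+1) i ^ logn i k = k.
Proof.
move=> /andP[k0 kn].
rewrite -[RHS](partnT k0) (widen_partn _ kn) big_mkord.
by apply: eq_bigl => i.
Qed.

Lemma factor_big (n : nat) (g : nat -> R) :
  (forall k, Rle 0 (g k)) -> g 1%N = R1 ->
  (forall a b, (0 < a)%N -> (0 < b)%N -> g (a*b)%N = Rmult (g a) (g b)) ->
  Rle (\big[Rplus/R0]_(k < n) g k.+1)
   (\big[Rmult/R1]_(i < n.+1)
      (if prime i then \big[Rplus/R0]_(j < n.+1) g (i ^ j)%N else R1)).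
Proof.
move=> g0 g1 gM.
pose G (i j : 'I_n.+1) := if prime i then g (i ^ j)%N
                          else (if j == ord0 then R1 else R0).
have -> : \big[Rmult/R1]_(i < n.+1)
      (if prime i then \big[Rplus/R0]_(j < n.+1) g (i ^ j)%N else R1)
   = \big[Rmult/R1]_(i < n.+1) \big[Rplus/R0]_(j < n.+1) G i j.
  apply: eq_bigr => i _; rewrite /G; case: (prime i) => //.
  by rewrite big_ord_recl /= big1 ?Rplus_0_r.
rewrite bigA_distr_bigA /=.
pose phi (k : 'I_n) : {ffun 'I_n.+1 -> 'I_n.+1} :=
  [ffun i : 'I_n.+1 => inord (logn i k.+1)].
have phiE k (i : 'I_n.+1) : (phi k i : nat) = logn i k.+1.
  rewrite ffunE inordK //; apply: logn_small.
  by rewrite ltn0Sn ltn_ord.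
have gprod : forall (s : seq 'I_n.+1) (F : 'I_n.+1 -> nat),
    (forall i, 0 < F i)%N ->
    g (\prod_(i <- s) F i)%N = \big[Rmult/R1]_(i <- s) g (F i).
  move=> s F Fpos; elim: s => [|a s IH]; first by rewrite !big_nil.
  rewrite !big_cons gM //; first by rewrite IH.
  by apply: prodn_gt0.
have termE k : \big[Rmult/R1]_(i < n.+1) G i (phi k i) = g k.+1.
  have expos (i : 'I_n.+1) : (0 < i ^ logn i k.+1)%N.
    case pi: (prime i); first by rewrite expn_gt0 prime_gt0.
    by rewrite lognE pi.
  rewrite -[in RHS](@prod_logn n k.+1); last by rewrite ltn0Sn ltn_ord.
  rewrite gprod //.
  apply: eq_bigr => i _; rewrite /G phiE.
  case pi: (prime i) => //.
  rewrite lognE pi /= expn0 g1.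
  suff -> : phi k i == ord0 by [].
  by apply/eqP/val_inj; rewrite /= phiE lognE pi.
have phi_inj : injective phi.
  move=> k1 k2 e; apply: val_inj; apply: succn_inj.
  rewrite -(@prod_logn n k1.+1); last by rewrite ltn0Sn ltn_ord.
  rewrite -(@prod_logn n k2.+1); last by rewrite ltn0Sn ltn_ord.
  by apply: eq_bigr => i _; rewrite -!phiE e.
have -> : \big[Rplus/R0]_(k < n) g k.+1 =
   \big[Rplus/R0]_(k < n) \big[Rmult/R1]_(i < n.+1) G i (phi k i).
  by apply: eq_bigr => k _; rewrite termE.
rewrite -(big_imset (fun f => \big[Rmult/R1]_(i < n.+1) G i (f i))
   (h := phi) (A := predT)); last by move=> x y _ _; apply: phi_inj.
rewrite [X in Rle _ X](bigID (mem [set phi x | x in predT])) /=.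
rewrite -[X in Rle X _]Rplus_0_r.
apply: Rplus_le_compat_l.
apply: (big_ind (fun x => Rle 0 x)) => //; first by apply: Rle_refl.
  by move=> x y hx hy; apply: Rplus_le_le_0_compat.
move=> f _; apply: (big_ind (fun x => Rle 0 x)) => //.
  by apply: Rle_0_1.
  by move=> x y hx hy; apply: Rmult_le_pos.
move=> i _; rewrite /G; case: (prime i) => //.
case: (_ == _); [apply: Rle_0_1 | apply: Rle_refl].
Qed.

Lemma smE g N : sm g N = \big[Rplus/R0]_(k < N) g k.
Proof. by elim: N => [|N IH]; rewrite ?big_ord0 // big_ord_recr /= IH. Qed.
Lemma pmE g N : pm g N = \big[Rmult/R1]_(k < N) g k.
Proof. by elim: N => [|N IH]; rewrite ?big_ord0 // big_ord_recr /= IH. Qed.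

Lemma powE i j : Nat.pow i j = i ^ j.
Proof. by elim: j => [|j IH] //=; rewrite expnS IH. Qed.

Lemma factor_sm (n : nat) (g : nat -> R) :
  (forall k, Rle 0 (g k)) -> g 1%N = R1 ->
  (forall a b, (0 < a)%N -> (0 < b)%N -> g (Nat.mul a b) = Rmult (g a) (g b)) ->
  Rle (sm (fun k => g (S k)) n)
   (pm (fun i => match prime_dec (Z.of_nat i) with
                 | left _ => sm (fun j => g (Nat.pow i j)) (S n) | right _ => R1 end) (S n)).
Proof.
move=> g0 g1 gM.
rewrite smE pmE.
have -> : \big[Rmult/R1]_(k < n.+1) (match prime_dec (Z.of_nat k) with
                 | left _ => sm (fun j => g (Nat.pow k j)) (S n) | right _ => R1 end)
  = \big[Rmult/R1]_(i < n.+1)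
      (if prime i then \big[Rplus/R0]_(j < n.+1) g (i ^ j)%N else R1).
  apply: eq_bigr => i _; case: prime_dec => [hp | hp].
    rewrite smE (_ : prime i = true) /=; last exact/primeZ.
    by apply: eq_bigr => j _; rewrite powE.
  rewrite /=; case pi: (prime i) => //; exfalso; apply: hp; exact/primeZ.
apply: factor_big => //.
Qed.
End Comb.

Lemma sm_ext f g N : (forall k, (k < N)%nat -> f k = g k) -> sm f N = sm g N.
Proof.
induction N as [|N IH]; intros H; simpl; auto.
rewrite IH by (intros; apply H; lia). rewrite H by lia. reflexivity.
Qed.

Lemma sm_shift g N : sm g (S N) = g O + sm (fun k => g (S k)) N.
Proof. induction N as [|N IH]; simpl in *; [lra|]. rewrite IH. lra. Qed.

Lemma sm_plus f g N : sm (fun k => f k + g k) N = sm f N + sm g N.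
Proof. induction N; simpl; [lra|]. rewrite IHN; lra. Qed.

Lemma sm_scal c f N : sm (fun k => c * f k) N = c * sm f N.
Proof. induction N; simpl; [lra|]. rewrite IHN; lra. Qed.

Lemma sm_le f g N : (forall k, (k < N)%nat -> f k <= g k) -> sm f N <= sm g N.
Proof.
induction N as [|N IH]; intros H; simpl; [lra|].
assert (sm f N <= sm g N) by (apply IH; intros; apply H; lia).
assert (f N <= g N) by (apply H; lia). lra.
Qed.

Lemma sm_nonneg f N : (forall k, (k < N)%nat -> 0 <= f k) -> 0 <= sm f N.
Proof.
intros H. replace 0 with (sm (fun _ => 0) N).
- apply sm_le; auto.
- induction N; simpl; auto. rewrite IHN; [lra|]. intros; apply H; lia.
Qed.

Lemma sm_mono f N M : (N <= M)%nat -> (forall k, 0 <= f k) -> sm f N <= sm f M.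
Proof.
intros H Hf. induction H; [lra|]. simpl. specialize (Hf m). lra.
Qed.

Lemma pair_sum N : forall g, sm g (2*N) = sm (fun k => g k + g (2*N-1-k)%nat) N.
Proof.
induction N as [|N IH]; intros g; [simpl; lra|].
replace (2 * S N)%nat with (S (S (2*N))) by lia.
rewrite sm_shift.
change (sm (fun k => g (S k)) (S (2*N))) with (sm (fun k => g (S k)) (2*N) + g (S (2*N))).
rewrite (IH (fun k => g (S k))).
rewrite sm_shift.
rewrite (sm_ext (fun k => g (S k) + g (S (S (2 * N)) - 1 - S k)%nat)
                (fun k => g (S k) + g (S (2 * N - 1 - k)))).
- replace (S (S (2 * N)) - 1 - 0)%nat with (S (2*N)) by lia. lra.
- intros k Hk. f_equal. f_equal. lia.
Qed.

Definition csc2 t := / (sin t) ^ 2.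
Definition ang n k := (2 * INR k + 1) * PI / 2 ^ (n+2).

Lemma csc2_double t : 0 < t < PI/2 ->
  csc2 t + csc2 (PI/2 - t) = 4 * csc2 (2*t).
Proof.
intros Ht. unfold csc2. rewrite sin_shift, sin_2a.
assert (0 < sin t) by (apply sin_gt_0; lra).
assert (0 < cos t) by (apply cos_gt_0; lra).
assert (E : sin t ^ 2 + cos t ^ 2 = 1) by (pose proof (sin2_cos2 t); unfold Rsqr in *; lra).
field_simplify_eq; [|lra].

nra.
Qed.

Lemma ang_pos n k : (k < 2^n)%nat -> 0 < ang n k < PI/2.
Proof.
intros Hk. unfold ang.
assert (H2 : INR k + 1 <= 2 ^ n).
{ rewrite <- S_INR. replace 2 with (INR 2) by (simpl; lra). rewrite <- pow_INR.
  apply le_INR. lia. }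
assert (0 <= INR k) by apply pos_INR.
pose proof PI_RGT_0.
assert (0 < 2 ^ n) by (apply pow_lt; lra).
rewrite pow_add. split.
- apply Rdiv_lt_0_compat; [nra|]. simpl; lra.
- apply Rmult_lt_reg_r with (2 ^ n * 2 ^ 2); [simpl; nra|].
  unfold Rdiv. rewrite Rmult_assoc, Rinv_l by (simpl; nra). simpl. nra.
Qed.

Lemma B_val n : sm (fun k => csc2 (ang n k)) (2^n) = 2 * 4 ^ n.
Proof.
induction n as [|n IH].
- cbn [sm Nat.pow]. unfold csc2, ang. simpl INR.
  replace ((2 * 0 + 1) * PI / 2 ^ (0+2)) with (PI/4) by (simpl; field).
  rewrite sin_PI4.
  assert (Hs : (1 / sqrt 2) ^ 2 = / 2).
  { simpl. rewrite Rmult_1_r. unfold Rdiv. rewrite Rmult_1_l, <- Rinv_mult, sqrt_sqrt; lra. }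
  rewrite Hs. simpl. lra.
- replace (2 ^ S n)%nat with (2 * 2^n)%nat by (simpl; lia).
  rewrite pair_sum.
  rewrite (sm_ext _ (fun k => 4 * csc2 (ang n k))).
  + rewrite sm_scal, IH. simpl. lra.
  + intros k Hk.
    assert (Hk' : (k < 2 ^ S n)%nat) by (simpl; lia).
    pose proof (ang_pos _ _ Hk').
    replace (ang (S n) (2 * 2 ^ n - 1 - k)) with (PI/2 - ang (S n) k).
    * rewrite csc2_double by lra. f_equal. f_equal. unfold ang.
      replace (S n + 2)%nat with (S (n+2)) by lia. simpl. field.
      apply pow_nonzero; lra.
    * unfold ang. rewrite minus_INR by lia. rewrite minus_INR by lia.
      rewrite mult_INR, pow_INR. simpl INR.
      replace (S n + 2)%nat with (S (S (S n))) by lia.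
      replace (n+2)%nat with (S (S n)) by lia. simpl pow.
      replace (1+1) with 2 by lra. field. apply pow_nonzero; lra.
Qed.

Lemma inv_sq_le_csc2 x : 0 < x < PI/2 -> / x ^ 2 <= csc2 x.
Proof.
intros Hx. unfold csc2.
assert (0 < sin x) by (apply sin_gt_0; pose proof PI_RGT_0; lra).
assert (sin x < x) by (apply sin_lt_x; lra).
apply Rlt_le, Rinv_lt_contravar.
- apply Rmult_lt_0_compat; apply pow_lt; lra.
- simpl. nra.
Qed.

Lemma odd_bound_pow n : sm (fun k => / (2 * INR k + 1) ^ 2) (2 ^ n) <= PI ^ 2 / 8.
Proof.
pose proof PI_RGT_0 as Hpi.
set (c := (2 ^ (n+2) / PI) ^ 2).
assert (Hc : 0 < c) by (unfold c; apply pow_lt, Rdiv_lt_0_compat; [apply pow_lt|]; lra).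
assert (H : c * sm (fun k => / (2 * INR k + 1) ^ 2) (2 ^ n) <= 2 * 4 ^ n).
{ rewrite <- B_val, <- sm_scal. apply sm_le. intros k Hk.
  pose proof (ang_pos _ _ Hk).
  eapply Rle_trans; [|apply inv_sq_le_csc2; auto].
  unfold c, ang. right. assert (0 <= INR k) by apply pos_INR.
  assert (2 ^ (n + 2) <> 0) by (apply pow_nonzero; lra). field. lra. }
assert (Hc' : c = 16 * 4 ^ n / PI ^ 2).
{ unfold c. rewrite pow_add. replace 4 with (2^2) by (simpl; lra).
  rewrite <- pow_mult. replace (2 * n)%nat with (n + n)%nat by lia.
  rewrite pow_add. simpl. field. lra. }
rewrite Hc' in H.
assert (H4 : 0 < 4 ^ n) by (apply pow_lt; lra).
set (O := sm (fun k => / (2 * INR k + 1) ^ 2) (2 ^ n)) in *.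
apply Rmult_le_reg_l with (16 * 4 ^ n / PI ^ 2).
- apply Rdiv_lt_0_compat; [lra|]. apply pow_lt; lra.
- replace (16 * 4 ^ n / PI ^ 2 * (PI ^ 2 / 8)) with (2 * 4 ^ n) by (field; lra). lra.
Qed.

Lemma odd_bound N : sm (fun k => / (2 * INR k + 1) ^ 2) N <= PI ^ 2 / 8.
Proof.
eapply Rle_trans; [|apply (odd_bound_pow N)].
apply sm_mono.
- apply Nat.lt_le_incl, Nat.pow_gt_lin_r; lia.
- intros k. apply Rlt_le, Rinv_0_lt_compat, pow_lt.
  pose proof (pos_INR k). lra.
Qed.

Definition T M := sm (fun k => / (INR k + 1) ^ 2) M.

Lemma T_double N : T (2 * N) = sm (fun k => / (2 * INR k + 1) ^ 2) N + T N / 4.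
Proof.
unfold T. induction N as [|N IH]; [simpl; lra|].
replace (2 * S N)%nat with (S (S (2 * N))) by lia.
change (sm (fun k => / (INR k + 1) ^ 2) (S (S (2 * N)))) with
  (sm (fun k => / (INR k + 1) ^ 2) (2 * N) + / (INR (2*N) + 1) ^ 2 + / (INR (S (2*N)) + 1) ^ 2).
change (sm (fun k => / (INR k + 1) ^ 2) (S N)) with
  (sm (fun k => / (INR k + 1) ^ 2) N + / (INR N + 1) ^ 2).
change (sm (fun k => / (2 * INR k + 1) ^ 2) (S N)) with
  (sm (fun k => / (2 * INR k + 1) ^ 2) N + / (2 * INR N + 1) ^ 2).
rewrite IH.
rewrite S_INR, mult_INR. simpl INR.
assert (0 <= INR N) by apply pos_INR.
field. lra.
Qed.

Lemma basel_bound M : T M <= PI ^ 2 / 6.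
Proof.
assert (H1 : T M <= T (2 * M)).
{ apply sm_mono; [lia|]. intros k. apply Rlt_le, Rinv_0_lt_compat, pow_lt.
  pose proof (pos_INR k). lra. }
pose proof (T_double M). pose proof (odd_bound M). lra.
Qed.

Lemma geom_sm z N : sm (fun m => z ^ m) N * (1 - z) = 1 - z ^ N.
Proof. induction N as [|N IH]; simpl; [lra|]. rewrite Rmult_plus_distr_r, IH. ring. Qed.

Lemma derive_Ssum n z :
  is_derive (fun z => sm (fun m => z ^ S m / INR (S m)) n) z (sm (fun m => z ^ m) n).
Proof.
induction n as [|n IH].
- simpl. apply (is_derive_const 0).
- simpl. apply (is_derive_plus (fun z => sm (fun m => z ^ S m / INR (S m)) n)
     (fun z => z ^ S n / INR (S n))); auto.
  assert (INR (S n) <> 0) by (apply not_0_INR; lia).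
  evar_last. { auto_derive; auto. }
  change (match n with 0%nat => 1 | S _ => INR n + 1 end) with (INR (S n)).
  simpl. field. auto.
Qed.

Definition Dfun n z := sm (fun m => z ^ S m / INR (S m)) n - ln ((1 - z ^ S n) / (1 - z)).

Lemma Dfun_derive n z : 0 <= z < 1 ->
  is_derive (Dfun n) z
   ((1 - z ^ n) / (1 - z) -
    (- INR (S n) * z ^ n * (1 - z) + (1 - z ^ S n)) / ((1 - z) * (1 - z ^ S n))).
Proof.
intros Hz.
assert (Hw : z ^ S n < 1) by (apply pow_lt_1_compat; [lra|lia]).
assert (Hw0 : 0 <= z ^ n) by (apply pow_le; lra).
unfold Dfun.
apply (is_derive_minus (fun z => sm (fun m => z ^ S m / INR (S m)) n)
        (fun z => ln ((1 - z ^ S n) / (1 - z)))).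
- evar_last; [apply derive_Ssum|].
  apply Rmult_eq_reg_r with (1 - z); [|lra].
  rewrite geom_sm. field. lra.
- evar_last.
  { auto_derive; [|reflexivity]. repeat split; try lra.
    apply Rmult_lt_0_compat; [simpl in Hw; lra|]. apply Rinv_0_lt_compat; lra. }
  change (match n with 0%nat => 1 | S _ => INR n + 1 end) with (INR (S n)).
  simpl. field. simpl in Hw. split; lra.
Qed.





Lemma pow_le1 x k : 0 <= x <= 1 -> x ^ k <= 1.
Proof.
intros H; induction k; simpl; [lra|].
assert (0 <= x ^ k) by (apply pow_le; lra). nra.
Qed.

Lemma sm_const1 N : sm (fun _ => 1) N = INR N.
Proof. induction N; simpl sm; [simpl; lra|]. rewrite IHN, S_INR. lra. Qed.

Lemma P_le z n : 0 <= z <= 1 -> sm (fun j => z ^ j) n <= INR n.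
Proof.
intros Hz. rewrite <- sm_const1. apply sm_le. intros; apply pow_le1; auto.
Qed.

Lemma P_ge1 z n : 0 <= z -> 1 <= sm (fun j => z ^ j) (S n).
Proof.
intros Hz. induction n as [|n IH]; [simpl; lra|].
change (sm (fun j => z ^ j) (S (S n))) with (sm (fun j => z ^ j) (S n) + z ^ S n).
assert (0 <= z ^ S n) by (apply pow_le; lra). lra.
Qed.

Lemma Dfun_deriv_nonneg n z : 0 <= z < 1 ->
  0 <= (1 - z ^ n) / (1 - z) -
    (- INR (S n) * z ^ n * (1 - z) + (1 - z ^ S n)) / ((1 - z) * (1 - z ^ S n)).
Proof.
intros Hz.
set (P := sm (fun j => z ^ j) (S n)).
assert (HP : P * (1 - z) = 1 - z ^ S n) by apply geom_sm.
assert (HP1 : 1 <= P) by (apply P_ge1; lra).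
assert (HPn : P <= INR (S n)) by (apply P_le; lra).
assert (Hw0 : 0 <= z ^ n) by (apply pow_le; lra).
rewrite <- HP.
replace ((1 - z ^ n) / (1 - z) -
  (- INR (S n) * z ^ n * (1 - z) + P * (1 - z)) / ((1 - z) * (P * (1 - z))))
  with (z ^ n * (INR (S n) - P) / (P * (1 - z))) by (field; lra).
apply Rmult_le_pos.
- apply Rmult_le_pos; lra.
- apply Rlt_le, Rinv_0_lt_compat, Rmult_lt_0_compat; lra.
Qed.

Lemma sm0 n : sm (fun m => 0 ^ S m / INR (S m)) n = 0.
Proof. induction n; cbn [sm]; [lra|]. rewrite IHn. unfold Rdiv. simpl pow. ring. Qed.

Lemma local_bound_lt1 n y : 0 <= y < 1 ->
  ln (sm (fun j => y ^ j) (S n)) <= sm (fun m => y ^ S m / INR (S m)) n.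
Proof.
intros Hy.
assert (HD : forall z, 0 <= z < 1 -> is_derive (Dfun n) z
   ((1 - z ^ n) / (1 - z) -
    (- INR (S n) * z ^ n * (1 - z) + (1 - z ^ S n)) / ((1 - z) * (1 - z ^ S n))))
  by (intros; apply Dfun_derive; auto).
destruct (MVT_gen (Dfun n) 0 y
   (fun z => (1 - z ^ n) / (1 - z) -
    (- INR (S n) * z ^ n * (1 - z) + (1 - z ^ S n)) / ((1 - z) * (1 - z ^ S n))))
  as [c [Hc Hmvt]].
- rewrite Rmin_left, Rmax_right by lra. intros x Hx. apply HD; lra.
- rewrite Rmin_left, Rmax_right by lra. intros x Hx.
  apply (proj2 (continuity_pt_filterlim _ _)). apply (ex_derive_continuous (Dfun n)).
  eexists. apply HD; lra.
- rewrite Rmin_left, Rmax_right in Hc by lra.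
  assert (Hd : 0 <= (1 - c ^ n) / (1 - c) -
    (- INR (S n) * c ^ n * (1 - c) + (1 - c ^ S n)) / ((1 - c) * (1 - c ^ S n)))
    by (apply Dfun_deriv_nonneg; lra).
  assert (D0 : Dfun n 0 = 0).
  { unfold Dfun. rewrite sm0.
    replace ((1 - 0 ^ S n) / (1 - 0)) with 1 by (simpl; field). rewrite ln_1. lra. }
  assert (HDy : 0 <= Dfun n y) by (rewrite D0 in Hmvt; nra).
  unfold Dfun in HDy.
  assert (HP : sm (fun j => y ^ j) (S n) = (1 - y ^ S n) / (1 - y)).
  { rewrite <- geom_sm. field. lra. }
  rewrite HP. lra.
Qed.

Lemma ln_1p_le u : 0 < u -> ln (1 + u) <= u.
Proof.
intros Hu. apply Rlt_le. rewrite <- (ln_exp u) at 2.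
apply ln_increasing; [lra|]. apply exp_ineq1; lra.
Qed.

Lemma harmonic_ln n : ln (INR (S n)) <= sm (fun m => / INR (S m)) n.
Proof.
induction n as [|n IH].
- simpl. rewrite ln_1. lra.
- cbn [sm].
  assert (Ha : 0 < INR (S n)) by (apply lt_0_INR; lia).
  replace (INR (S (S n))) with (INR (S n) * (1 + / INR (S n)))
    by (rewrite (S_INR (S n)); field; lra).
  rewrite ln_mult by (try lra; assert (0 < / INR (S n)) by (apply Rinv_0_lt_compat; lra); lra).
  assert (ln (1 + / INR (S n)) <= / INR (S n)) by (apply ln_1p_le, Rinv_0_lt_compat; lra).
  lra.
Qed.

Lemma local_bound n y : 0 <= y <= 1 ->
  ln (sm (fun j => y ^ j) (S n)) <= sm (fun m => y ^ S m / INR (S m)) n.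
Proof.
intros Hy. destruct (Req_dec y 1) as [->|Hne].
- rewrite (sm_ext _ (fun _ => 1)) by (intros; apply pow1).
  rewrite sm_const1.
  rewrite (sm_ext _ (fun m => / INR (S m))) by (intros; rewrite pow1; unfold Rdiv; ring).
  apply harmonic_ln.
- apply local_bound_lt1; lra.
Qed.

Definition gx (x : R) (k : nat) := exp (ln (INR k) * ln x).

Lemma sum_f_sm f N : sum_f_R0 f N = sm f (S N).
Proof. induction N; simpl; [lra|]. rewrite IHN. reflexivity. Qed.

Lemma F_sm n x : (1 <= n)%nat -> F n x = sm (fun k => gx x (S k)) n.
Proof.
intros Hn. unfold F. rewrite sum_f_sm. replace (S (n-1)) with n by lia.
apply sm_ext. intros k _. unfold gx, Rpower. rewrite Nat.add_1_r. reflexivity.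
Qed.

Lemma gx_nonneg x k : 0 <= gx x k.
Proof. unfold gx. apply Rlt_le, exp_pos. Qed.

Lemma gx_1 x : gx x 1 = 1.
Proof. unfold gx. simpl. rewrite ln_1, Rmult_0_l, exp_0. reflexivity. Qed.

Lemma gx_mult x a b : (0 < a)%nat -> (0 < b)%nat -> gx x (Nat.mul a b) = gx x a * gx x b.
Proof.
intros Ha Hb. unfold gx. rewrite mult_INR, ln_mult.
- rewrite <- exp_plus. f_equal. ring.
- apply lt_0_INR; lia.
- apply lt_0_INR; lia.
Qed.

Lemma exp_mult_nat j c : exp (INR j * c) = exp c ^ j.
Proof.
induction j as [|j IH].
- simpl. rewrite Rmult_0_l, exp_0. reflexivity.
- rewrite S_INR, Rmult_plus_distr_r, exp_plus, IH. rewrite Rmult_1_l. simpl. ring.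
Qed.

Lemma gx_pow x i j : (0 < i)%nat -> gx x (Nat.pow i j) = gx x i ^ j.
Proof.
intros Hi. unfold gx. rewrite pow_INR, ln_pow by (apply lt_0_INR; lia).
rewrite Rmult_assoc. apply exp_mult_nat.
Qed.

Lemma gx_le1 x i : 0 < x <= 1 -> (0 < i)%nat -> gx x i <= 1.
Proof.
intros Hx Hi. unfold gx. rewrite <- exp_0.
assert (0 <= ln (INR i)).
{ rewrite <- ln_1. apply ln_le; [lra|]. apply (le_INR 1). lia. }
assert (ln x <= 0) by (rewrite <- ln_1; apply ln_le; lra).
destruct (Rle_lt_or_eq_dec _ _ (Rmult_le_0_l _ _ H H0)) as [Hl|He].
- left; apply exp_increasing; lra.
- rewrite He; lra.
Qed.

Lemma pm_pos f N : (forall k, (k < N)%nat -> 0 < f k) -> 0 < pm f N.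
Proof.
induction N as [|N IH]; intros H; simpl; [lra|].
apply Rmult_lt_0_compat; [apply IH; intros; apply H; lia | apply H; lia].
Qed.

Lemma ln_pm f N : (forall k, (k < N)%nat -> 0 < f k) ->
  ln (pm f N) = sm (fun k => ln (f k)) N.
Proof.
induction N as [|N IH]; intros H; simpl; [apply ln_1|].
rewrite ln_mult; [rewrite IH; auto; intros; apply H; lia| |apply H; lia].
apply pm_pos; intros; apply H; lia.
Qed.

Lemma F_ge1 n x : (1 <= n)%nat -> 1 <= F n x.
Proof.
intros Hn. rewrite F_sm by auto. destruct n as [|n]; [lia|].
rewrite sm_shift. rewrite gx_1.
assert (0 <= sm (fun k => gx x (S (S k))) n) by (apply sm_nonneg; intros; apply gx_nonneg).
lra.
Qed.

Lemma prime_gt1 i : Znumtheory.prime (Z.of_nat i) -> (1 < i)%nat.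
Proof. intros [H _]. lia. Qed.

Definition hterm (n i : nat) (x : R) := sm (fun m => gx x i ^ S m / INR (S m) / x) n.
Definition h (n : nat) (x : R) :=
  sm (fun i => if prime_dec (Z.of_nat i) then hterm n i x else 0) (S n).

Lemma pointwise n x : (1 <= n)%nat -> 0 < x <= 1 -> ln (F n x) / x <= h n x.
Proof.
intros Hn Hx.
assert (Hf : F n x <= pm (fun i => if prime_dec (Z.of_nat i)
                 then sm (fun j => gx x (Nat.pow i j)) (S n) else R1) (S n)).
{ rewrite F_sm by auto. apply Comb.factor_sm.
  - apply gx_nonneg.
  - apply gx_1.
  - intros a b Ha Hb. apply gx_mult; [destruct a; [discriminate Ha|lia]|destruct b; [discriminate Hb|lia]]. }
assert (Hpos : forall i, (i < S n)%nat -> 0 < (if prime_dec (Z.of_nat i)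
                 then sm (fun j => gx x (Nat.pow i j)) (S n) else R1)).
{ intros i _. destruct prime_dec; [|lra].
  rewrite sm_shift. change (Nat.pow i 0) with 1%nat. rewrite gx_1.
  assert (0 <= sm (fun k => gx x (Nat.pow i (S k))) n) by (apply sm_nonneg; intros; apply gx_nonneg).
  lra. }
assert (Hl : ln (F n x) <= sm (fun i => if prime_dec (Z.of_nat i)
            then sm (fun m => gx x i ^ S m / INR (S m)) n else 0) (S n)).
{ eapply Rle_trans; [apply ln_le; [pose proof (F_ge1 n x Hn); lra | exact Hf]|].
  rewrite ln_pm by exact Hpos.
  apply sm_le. intros i Hi. destruct prime_dec as [Hp|Hp]; [|change (ln R1) with (ln 1); rewrite ln_1; lra].
  pose proof (prime_gt1 _ Hp).
  rewrite (sm_ext _ (fun j => gx x i ^ j)) by (intros; apply gx_pow; lia).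
  apply local_bound. split; [apply gx_nonneg|apply gx_le1; auto; lia]. }
assert (Hh : h n x = / x * sm (fun i => if prime_dec (Z.of_nat i)
            then sm (fun m => gx x i ^ S m / INR (S m)) n else 0) (S n)).
{ unfold h. rewrite <- sm_scal. apply sm_ext. intros i _.
  destruct prime_dec; [|ring]. unfold hterm. rewrite <- sm_scal.
  apply sm_ext. intros; field. split; [apply not_0_INR; lia|lra]. }
rewrite Hh. unfold Rdiv. rewrite Rmult_comm.
apply Rmult_le_compat_l; [apply Rlt_le, Rinv_0_lt_compat; lra|exact Hl].
Qed.

Lemma is_RInt_sm (u : nat -> R -> R) (I : nat -> R) a b N :
  (forall k, (k < N)%nat -> is_RInt (u k) a b (I k)) ->
  is_RInt (fun x => sm (fun k => u k x) N) a b (sm I N).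
Proof.
induction N as [|N IH]; intros H; simpl.
- pose proof (is_RInt_const a b 0) as H0.
  assert (E : scal (b - a) (0:R) = 0) by (unfold scal; simpl; unfold mult; simpl; ring).
  exact (eq_rect _ (is_RInt (fun _ => 0) a b) H0 0 E).
- apply (is_RInt_plus (fun x => sm (fun k => u k x) N) (u N)).
  + apply IH. intros; apply H; lia.
  + apply H; lia.
Qed.

Lemma ln_INR_pos i : (1 < i)%nat -> 0 < ln (INR i).
Proof.
intros Hi. rewrite <- ln_1. apply ln_increasing; [lra|].
apply (lt_INR 1). exact Hi.
Qed.

Lemma hterm_int n i eps : 0 < eps <= 1 -> (1 < i)%nat ->
  is_RInt (hterm n i) eps 1
    (sm (fun m => (1 - gx eps i ^ S m) / (INR (S m) ^ 2 * ln (INR i))) n).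
Proof.
intros He Hi. unfold hterm. apply is_RInt_sm. intros m _.
pose proof (ln_INR_pos i Hi) as Hl.
assert (Hm : INR (S m) <> 0) by (apply not_0_INR; lia).
assert (HU : forall x, 0 < x -> is_derive (fun x => gx x i ^ S m / (INR (S m) ^ 2 * ln (INR i))) x
             (gx x i ^ S m / INR (S m) / x)).
{ intros x Hx. unfold gx. evar_last.
  - auto_derive; [lra|reflexivity].
  - change (match m with 0%nat => 1 | S _ => INR m + 1 end) with (INR (S m)).
    simpl pow. field. repeat split; lra. }
assert (Hc : forall x, 0 < x -> continuous (fun x => gx x i ^ S m / INR (S m) / x) x).
{ intros x Hx. apply (ex_derive_continuous (fun x => gx x i ^ S m / INR (S m) / x)).
  unfold gx. auto_derive. repeat split; lra. }
pose proof (is_RInt_derive (fun x => gx x i ^ S m / (INR (S m) ^ 2 * ln (INR i)))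
  (fun x => gx x i ^ S m / INR (S m) / x) eps 1) as HI.
rewrite Rmin_left, Rmax_right in HI by lra.
replace ((1 - gx eps i ^ S m) / (INR (S m) ^ 2 * ln (INR i))) with
  (minus (gx 1 i ^ S m / (INR (S m) ^ 2 * ln (INR i)))
         (gx eps i ^ S m / (INR (S m) ^ 2 * ln (INR i)))).
- apply HI; intros x Hx; [apply HU|apply Hc]; lra.
- unfold gx at 1. rewrite ln_1, Rmult_0_r, exp_0, pow1.
  unfold minus, plus, opp; simpl. field. split; [lra|exact Hm].
Qed.

Lemma hterm_val_bound n i eps : 0 < eps <= 1 -> (1 < i)%nat ->
  sm (fun m => (1 - gx eps i ^ S m) / (INR (S m) ^ 2 * ln (INR i))) n
  <= PI ^ 2 / 6 / ln (INR i).
Proof.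
intros He Hi. pose proof (ln_INR_pos i Hi) as Hl.
eapply Rle_trans with (T n / ln (INR i)).
- unfold T, Rdiv at 2. rewrite Rmult_comm, <- sm_scal.
  apply sm_le. intros m _.
  assert (0 <= gx eps i ^ S m) by (apply pow_le, gx_nonneg).
  assert (0 < INR (S m)) by (apply lt_0_INR; lia).
  rewrite S_INR in *.
  unfold Rdiv. rewrite Rinv_mult.
  apply Rle_trans with (1 * (/ (INR m + 1) ^ 2 * / ln (INR i))).
  + apply Rmult_le_compat_r; [|lra].
    apply Rmult_le_pos; apply Rlt_le, Rinv_0_lt_compat; [apply pow_lt|]; lra.
  + right; ring.
- unfold Rdiv. apply Rmult_le_compat_r; [apply Rlt_le, Rinv_0_lt_compat; lra|].
  pose proof (basel_bound n). lra.
Qed.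

Definition hval n eps := sm (fun i => if prime_dec (Z.of_nat i) then
   sm (fun m => (1 - gx eps i ^ S m) / (INR (S m) ^ 2 * ln (INR i))) n else 0) (S n).

Lemma h_int n eps : 0 < eps <= 1 -> is_RInt (h n) eps 1 (hval n eps).
Proof.
intros He. unfold h, hval.
apply (is_RInt_sm (fun i x => if prime_dec (Z.of_nat i) then hterm n i x else 0)).
intros i _. destruct prime_dec as [Hp|Hp].
- apply hterm_int; auto. apply prime_gt1; auto.
- pose proof (is_RInt_const eps 1 0) as H0.
  assert (E : scal (1 - eps) (0:R) = 0) by (unfold scal; simpl; unfold mult; simpl; ring).
  exact (eq_rect _ (is_RInt (fun _ => 0) eps 1) H0 0 E).
Qed.

Lemma hval_bound n eps : 0 < eps <= 1 -> hval n eps <= PI ^ 2 / 6 * prime_inv_log_sum n.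
Proof.
intros He. unfold hval, prime_inv_log_sum. rewrite sum_f_sm, <- sm_scal.
apply sm_le. intros i _. destruct prime_dec as [Hp|Hp].
- apply hterm_val_bound; auto. apply prime_gt1; auto.
- lra.
Qed.

Lemma ex_derive_sm (u : nat -> R -> R) N x :
  (forall k, ex_derive (u k) x) -> ex_derive (fun x => sm (fun k => u k x) N) x.
Proof.
intros H. induction N as [|N IH]; simpl.
- apply ex_derive_const.
- apply (ex_derive_plus (fun x => sm (fun k => u k x) N) (u N)); auto.
Qed.

Lemma F_ex_derive n x : (1 <= n)%nat -> 0 < x -> ex_derive (F n) x.
Proof.
intros Hn Hx.
apply (ex_derive_ext (fun x => sm (fun k => gx x (S k)) n)).
- intros t. symmetry. apply F_sm; auto.
- apply (ex_derive_sm (fun k x => gx x (S k))). intros k.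
  unfold gx. auto_derive. lra.
Qed.

Lemma f_cont n x : (1 <= n)%nat -> 0 < x -> continuous (fun x => ln (F n x) / x) x.
Proof.
intros Hn Hx. apply (ex_derive_continuous (fun x => ln (F n x) / x)).
auto_derive. repeat split.
- apply F_ex_derive; auto.
- pose proof (F_ge1 n x Hn). lra.
- lra.
Qed.

Lemma f_exRInt n a b : (1 <= n)%nat -> 0 < a <= b -> ex_RInt (fun x => ln (F n x) / x) a b.
Proof.
intros Hn Hab. apply (@ex_RInt_continuous R_CompleteNormedModule). intros z Hz.
rewrite Rmin_left, Rmax_right in Hz by lra. apply f_cont; auto; lra.
Qed.

Lemma f_nonneg n x : (1 <= n)%nat -> 0 < x -> 0 <= ln (F n x) / x.
Proof.
intros Hn Hx. unfold Rdiv. apply Rmult_le_pos.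
- rewrite <- ln_1. apply ln_le; [lra|]. apply F_ge1; auto.
- apply Rlt_le, Rinv_0_lt_compat; lra.
Qed.

Lemma I_bound n eps : (1 <= n)%nat -> 0 < eps <= 1 ->
  RInt (fun x => ln (F n x) / x) eps 1 <= PI ^ 2 / 6 * prime_inv_log_sum n.
Proof.
intros Hn He.
eapply Rle_trans; [|apply (hval_bound n eps He)].
rewrite <- (is_RInt_unique _ _ _ _ (h_int n eps He)).
apply RInt_le.
- lra.
- apply f_exRInt; auto; lra.
- eexists; apply h_int; auto.
- intros x Hx. apply pointwise; auto; lra.
Qed.

Lemma I_mono n e1 e2 : (1 <= n)%nat -> 0 < e1 <= e2 -> e2 <= 1 ->
  RInt (fun x => ln (F n x) / x) e2 1 <= RInt (fun x => ln (F n x) / x) e1 1.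
Proof.
intros Hn H12 H2.
rewrite <- (RInt_Chasles (fun x => ln (F n x) / x) e1 e2 1).
- assert (0 <= RInt (fun x => ln (F n x) / x) e1 e2).
  { apply RInt_ge_0; [lra| apply f_exRInt; auto; lra|].
    intros x Hx. apply f_nonneg; auto; lra. }
  unfold plus; simpl. lra.
- apply f_exRInt; auto; lra.
- apply f_exRInt; auto; lra.
Qed.

Theorem mainTheorem2 (n : nat) (hn : (2 <= n)%nat) :
  exists L : R,
    improper_integral_0_1 (fun x => ln (F n x) / x) L /\
    PI ^ 2 / 6 * prime_inv_log_sum n >= L.
Proof.
assert (Hn : (1 <= n)%nat) by lia.
set (f := fun x => ln (F n x) / x).
set (C := PI ^ 2 / 6 * prime_inv_log_sum n).
set (E := fun r => exists eps, 0 < eps <= 1 /\ r = RInt f eps 1).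
assert (HEb : bound E).
{ exists C. intros r [eps [He ->]]. apply I_bound; auto. }
assert (HEne : exists r, E r).
{ exists (RInt f 1 1). exists 1. split; [lra|reflexivity]. }
destruct (completeness E HEb HEne) as [L [HLub HLleast]].
exists L. split.
- split.
  + intros eps He. exists (ex_RInt_Reals_0 _ _ _ (f_exRInt n eps 1 Hn He)). exact I.
  + intros delta Hd.
    destruct (Classical_Prop.classic (exists eps, 0 < eps <= 1 /\ L - delta < RInt f eps 1))
      as [[e0 [He0 Hlt]]|Hno].
    * exists e0. split; [lra|].
      intros eps Heps Hle pr.
      rewrite <- (RInt_Reals f eps 1 pr).
      assert (RInt f eps 1 <= L) by (apply HLub; exists eps; split; [lra|reflexivity]).
      assert (RInt f e0 1 <= RInt f eps 1) by (apply I_mono; auto; lra).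
      apply Rabs_def1; lra.
    * exfalso.
      assert (L <= L - delta); [|lra].
      apply HLleast. intros r [eps [He ->]].
      destruct (Rle_or_lt (RInt f eps 1) (L - delta)) as [?|Hgt]; auto.
      exfalso. apply Hno. exists eps. split; auto.
- apply Rle_ge. apply HLleast. intros r [eps [He ->]]. apply I_bound; auto.
Qed.
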